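(* Let $\Lambda$ be a $d$-dimensional Euclidean lattice of minimum $1$, and let $\mathcal V=-\mathcal V\subset\Lambda\setminus\{0\}$ be a finite set of nonzero elements of squared Euclidean length at most $2$ whose convex hull $P$ is $d$-dimensional. Then (i) the interior of $P$ meets $\Lambda$ only in $\{0\}$; (ii) if moreover every element of $\mathcal V$ has squared Euclidean length strictly smaller than $2$, then $P\cap\Lambda=\mathcal V\cup\{0\}$ and $\mathcal V$ is the set of vertices of $P$.
   Context: The minimum of a lattice is the smallest squared Euclidean length of its nonzero elements. *)

(* Defs.v *)
From HB Require Import structures.
From mathcomp Require Import all_boot all_order all_algebra.
Set Implicit Arguments. Unset Strict Implicit. Unset Printing Implicit Defensive.
Import Order.TTheory GRing.Theory Num.Theory.
Local Open Scope ring_scope.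

Section Defs.
Variables (R : realFieldType) (d : nat).

Definition sqnorm (x : 'rV[R]_d) : R := \sum_(i < d) (x ord0 i) ^+ 2.

(* the lattice with basis matrix B (rows = basis vectors): { z B | z in Z^d } *)
Definition in_lattice (B : 'M[R]_d) (x : 'rV[R]_d) : Prop :=
  exists z : 'rV[int]_d, x = map_mx (fun k : int => k%:~R) z *m B.

Definition full_rank_lattice (B : 'M[R]_d) : Prop := B \in unitmx.

Definition lattice_min (B : 'M[R]_d) (m : R) : Prop :=
  (exists2 x, in_lattice B x & (x != 0) && (sqnorm x == m)) /\
  (forall x, in_lattice B x -> x != 0 -> m <= sqnorm x).

Definition conv (V : seq 'rV[R]_d) (x : 'rV[R]_d) : Prop :=
  exists l : nat -> R, (forall i, 0 <= l i) /\
    \sum_(i < size V) l i = 1 /\ x = \sum_(i < size V) l i *: V`_i.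

(* the affine hull of V is d-dimensional *)
Definition full_dim (V : seq 'rV[R]_d) : Prop :=
  exists2 v0, v0 \in V & \rank (\matrix_(i < size V) (V`_i - v0)) = d.

Definition interior (S : 'rV[R]_d -> Prop) (x : 'rV[R]_d) : Prop :=
  exists2 e : R, 0 < e & forall y, sqnorm (y - x) < e -> S y.

Definition is_vertex (S : 'rV[R]_d -> Prop) (x : 'rV[R]_d) : Prop :=
  S x /\ forall y z (t : R), S y -> S z -> 0 < t < 1 ->
    x = t *: y + (1 - t) *: z -> y = x /\ z = x.

End Defs.

(* Main.v *)
Require Import Defs.
From HB Require Import structures.
From mathcomp Require Import all_boot all_order all_algebra.
From mathcomp Require Import ring lra.
Set Implicit Arguments. Unset Strict Implicit. Unset Printing Implicit Defensive.
Import Order.TTheory GRing.Theory Num.Theory.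
Local Open Scope ring_scope.

Section Helpers.
Variables (R : realFieldType) (d : nat).
Implicit Types (x y z : 'rV[R]_d).

Definition dot x y : R := \sum_(i < d) x ord0 i * y ord0 i.

Lemma sqnorm_dot x : sqnorm x = dot x x.
Proof. by apply: eq_bigr => i _; rewrite expr2. Qed.

Lemma dotC x y : dot x y = dot y x.
Proof. by apply: eq_bigr => i _; rewrite mulrC. Qed.

Lemma dot0l y : dot 0 y = 0.
Proof. by rewrite /dot big1 // => i _; rewrite mxE mul0r. Qed.

Lemma dotDl x y z : dot (x + y) z = dot x z + dot y z.
Proof. by rewrite /dot -big_split; apply: eq_bigr => i _; rewrite mxE mulrDl. Qed.

Lemma dotZl a x y : dot (a *: x) y = a * dot x y.
Proof. by rewrite /dot mulr_sumr; apply: eq_bigr => i _; rewrite mxE mulrA. Qed.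

Lemma dot_suml n (l : nat -> R) (F : nat -> 'rV[R]_d) y :
  dot (\sum_(i < n) l i *: F i) y = \sum_(i < n) l i * dot (F i) y.
Proof.
elim/big_rec2: _ => [|i a b _ IH]; first by rewrite dot0l.
by rewrite dotDl dotZl IH.
Qed.

Lemma sqnormB x y : sqnorm (x - y) = sqnorm x - 2 * dot x y + sqnorm y.
Proof.
rewrite /sqnorm /dot mulr_sumr -sumrB -big_split /=; apply: eq_bigr => i _.
rewrite !mxE /=; ring.
Qed.

Lemma sqnormZ a x : sqnorm (a *: x) = a ^+ 2 * sqnorm x.
Proof. by rewrite /sqnorm mulr_sumr; apply: eq_bigr => i _; rewrite mxE exprMn. Qed.

Lemma latticeB (B : 'M[R]_d) x y : in_lattice B x -> in_lattice B y ->
  in_lattice B (x - y).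
Proof.
move=> [zx ->] [zy ->]; exists (zx - zy); rewrite -mulmxBl; congr (_ *m _).
by apply/matrixP => i j; rewrite !mxE intrB.
Qed.

Lemma avg_ge n (l : nat -> R) (a : 'I_n -> R) : (forall i, 0 <= l i) ->
  \sum_(i < n) l i = 1 -> exists i : 'I_n, \sum_(j < n) l j * a j <= a i.
Proof.
move=> l0 l1.
case: (boolP [exists i, \sum_(j < n) l j * a j <= a i]) => [/existsP//|/existsPn H].
exfalso; set S := \sum_(j < n) l j * a j in H.
have E : \sum_(i < n) l i * (S - a i) = 0.
  under eq_bigr do rewrite mulrBr.
  by rewrite sumrB -mulr_suml l1 mul1r subrr.
have : forall i : 'I_n, true -> l i * (S - a i) = 0.
  apply/psumr_eq0P => // i _; apply: mulr_ge0 => //.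
  by rewrite subr_ge0 ltW // ltNge H.
move=> H2; have : \sum_(i < n) l i = 0.
  apply: big1 => i _; have /eqP := H2 i isT; rewrite mulf_eq0 => /orP[/eqP //|].
  by rewrite subr_eq0 => /eqP Ei; have := H i; rewrite Ei lexx.
by rewrite l1 => /eqP; rewrite oner_eq0.
Qed.

Lemma exists_pos n (l : nat -> R) : (forall i, 0 <= l i) ->
  \sum_(i < n) l i = 1 -> exists i : 'I_n, 0 < l i.
Proof.
move=> l0 l1.
case: (boolP [exists i : 'I_n, 0 < l i]) => [/existsP//|/existsPn H].
exfalso; have : \sum_(i < n) l i = 0.
  by apply: big1 => i _; apply/eqP; rewrite eq_le l0 andbT leNgt H.
by rewrite l1 => /eqP; rewrite oner_eq0.
Qed.

Lemma sum_delta n a (F : nat -> 'rV[R]_d) : (a < n)%N ->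
  \sum_(k < n) ((k : nat) == a)%:R *: F k = F a.
Proof.
move=> ha; rewrite (bigD1 (Ordinal ha)) //= eqxx scale1r big1 ?addr0 //.
move=> j /negbTE; rewrite -val_eqE /= => ->; by rewrite scale0r.
Qed.

Lemma sum_deltaR n a : (a < n)%N -> \sum_(k < n) (((k : nat) == a)%:R : R) = 1.
Proof.
move=> ha; rewrite (bigD1 (Ordinal ha)) //= eqxx big1 ?addr0 //.
by move=> j /negbTE; rewrite -val_eqE /= => ->.
Qed.

Lemma conv_mem (V : seq 'rV[R]_d) v : v \in V -> conv V v.
Proof.
move=> vV; have ha : (index v V < size V)%N by rewrite index_mem.
exists (fun k => ((k == index v V)%:R)); split; first by move=> i; case: (_ == _).
by rewrite sum_deltaR // sum_delta // nth_index.
Qed.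

Lemma conv0 (V : seq 'rV[R]_d) v : v \in V -> - v \in V -> conv V 0.
Proof.
move=> vV nvV.
have ha : (index v V < size V)%N by rewrite index_mem.
have hb : (index (- v) V < size V)%N by rewrite index_mem.
exists (fun k => (((k == index v V)%:R + (k == index (-v) V)%:R) / 2)); split.
  by move=> i; apply: divr_ge0 => //; apply: addr_ge0; case: (_ == _).
split.
  rewrite -mulr_suml big_split /= !sum_deltaR //; by field.
under eq_bigr do rewrite mulrC -scalerA scalerDl.
rewrite -scaler_sumr big_split /= !sum_delta // !nth_index //.
by rewrite subrr scaler0.
Qed.

Lemma conv_max (V : seq 'rV[R]_d) y : conv V y ->
  exists2 v, v \in V & dot y y <= dot y v.
Proof.
move=> [l [l0 [l1 ->]]].
have [i Hi] := avg_ge (fun i : 'I_(size V) => dot (\sum_(i < size V) l i *: V`_i) V`_i) l0 l1.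
exists V`_i; first by rewrite mem_nth.
apply: le_trans Hi; rewrite le_eqVlt; apply/orP; left; apply/eqP.
by rewrite [LHS]dot_suml; apply: eq_bigr => j _; rewrite dotC.
Qed.


Lemma conv_le (V : seq 'rV[R]_d) v :
  (forall i : 'I_(size V), V`_i != v -> dot V`_i v < dot v v) ->
  forall y, conv V y -> dot y v <= dot v v /\ (dot v v <= dot y v -> y = v).
Proof.
move=> H y [l [l0 [l1 ->]]]; rewrite dot_suml.
have Hle : forall i : 'I_(size V), dot V`_i v <= dot v v.
  by move=> i; case: (eqVneq V`_i v) => [->|/H/ltW].
have E : dot v v - \sum_(i < size V) l i * dot V`_i v =
         \sum_(i < size V) l i * (dot v v - dot V`_i v).
  by under [RHS]eq_bigr do rewrite mulrBr; rewrite sumrB -mulr_suml l1 mul1r.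
have G : 0 <= \sum_(i < size V) l i * (dot v v - dot V`_i v).
  by apply: sumr_ge0 => i _; apply: mulr_ge0 => //; rewrite subr_ge0.
split; first by rewrite -subr_ge0 E.
move=> Hge.
have Z : \sum_(i < size V) l i * (dot v v - dot V`_i v) = 0.
  by apply/eqP; rewrite eq_le G andbT -E subr_le0.
have Zi : forall i : 'I_(size V), true -> l i * (dot v v - dot V`_i v) = 0.
  by apply/psumr_eq0P => // i _; apply: mulr_ge0 => //; rewrite subr_ge0.
rewrite (eq_bigr (fun i : 'I_(size V) => l i *: v)) => [|i _].
  by rewrite -scaler_suml l1 scale1r.
case: (eqVneq V`_i v) => [->//|/H hi].
have := Zi i isT; move/eqP; rewrite mulf_eq0 => /orP[/eqP->|]; first by rewrite !scale0r.
by rewrite subr_eq0 => /eqP hh; rewrite hh ltxx in hi.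
Qed.

Lemma vertex_mem (V : seq 'rV[R]_d) x : is_vertex (conv V) x -> x \in V.
Proof.
move=> [[l [l0 [l1 Ex]]] Hv]; have [i li] := exists_pos l0 l1.
have li1 : l i <= 1.
  by rewrite -l1 (bigD1 i) //= lerDl sumr_ge0.
set t := l i / 2.
have t0 : 0 < t by rewrite /t; lra.
have t1 : t < 1 by rewrite /t; lra.
have ht : 1 - t != 0 by rewrite subr_eq0 eq_sym lt_eqF.
pose mu := fun j : nat => (l j - t * (j == i)%:R) / (1 - t).
have Cz : conv V (\sum_(k < size V) mu k *: V`_k).
  exists mu; split.
    move=> j; rewrite /mu; apply: divr_ge0; last by rewrite subr_ge0 ltW.
    case: (eqVneq j i) => [->|_]; first by rewrite mulr1 /t; lra.
    by rewrite mulr0 subr0.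
  rewrite -mulr_suml sumrB -mulr_sumr sum_deltaR // mulr1 l1 divff //.
have Ex' : x = t *: V`_i + (1 - t) *: \sum_(k < size V) mu k *: V`_k.
  rewrite scaler_sumr.
  under eq_bigr do rewrite scalerA /mu mulrCA (divff ht) mulr1 scalerBl -scalerA.
  by rewrite sumrB -scaler_sumr sum_delta // -Ex addrC subrK.
have [<- _] := Hv _ _ t (conv_mem (mem_nth 0 (ltn_ord i))) Cz (andb_true_intro (conj t0 t1)) Ex'.
exact: mem_nth.
Qed.

End Helpers.
Unset Implicit Arguments.

Theorem proposition11p3 (R : realFieldType) (d : nat) (B : 'M[R]_d)
  (V : seq 'rV[R]_d) :
  full_rank_lattice B ->
  lattice_min B 1 ->
  (forall v, v \in V -> - v \in V) ->
  (forall v, v \in V -> in_lattice B v /\ v != 0) ->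
  (forall v, v \in V -> sqnorm v <= 2) ->
  full_dim V ->
  (forall x, in_lattice B x -> interior (conv V) x -> x = 0) /\
  ((forall v, v \in V -> sqnorm v < 2) ->
     (forall x, in_lattice B x -> (conv V x <-> x \in V \/ x = 0)) /\
     (forall x, is_vertex (conv V) x <-> x \in V)).
Proof.
move=> _ [_ Lmin] Vsym Vlat Vn2 [v0 v0V _].
have VL : forall v, v \in V -> in_lattice B v by move=> v /Vlat[].
split.
  move=> x xL [e e0 He]; case: (eqVneq x 0) => // xn0; exfalso.
  set s := sqnorm x.
  have s1 : 1 <= s := Lmin x xL xn0.
  set ep := e / (e + s).
  have es0 : 0 < e + s by lra.
  have ep0 : 0 < ep by rewrite /ep divr_gt0.
  have eps : ep * s < e.
    by rewrite /ep mulrAC ltr_pdivrMr //; nra.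
  have ep1 : ep < 1 by rewrite /ep ltr_pdivrMr //; lra.
  have Cy : conv V ((1 + ep) *: x).
    apply: He; rewrite scalerDl scale1r addrAC subrr add0r sqnormZ -/s; nra.
  have [v vV Hv] := conv_max Cy.
  rewrite !dotZl [dot x (_ *: _)]dotC dotZl -sqnorm_dot -/s in Hv.
  have H2 : (1 + ep) * s <= dot x v by rewrite -(ler_pM2l (_ : 0 < 1 + ep)) //; lra.
  have Ex : x - v = 0.
    apply/eqP; case: (eqVneq (x - v) 0) => // nz.
    have := Lmin _ (latticeB xL (VL v vV)) nz.
    rewrite sqnormB -/s; have := Vn2 v vV; nra.
  move/eqP: Ex; rewrite subr_eq0 => /eqP xv.
  rewrite -xv -sqnorm_dot -/s in H2; nra.
move=> Vlt2.
have conv_lat : forall x, in_lattice B x -> conv V x -> x \in V \/ x = 0.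
  move=> x xL Cx; case: (eqVneq x 0) => [->|xn0]; [by right| left].
  have s1 : 1 <= sqnorm x := Lmin x xL xn0.
  have [v vV Hv] := conv_max Cx; rewrite -sqnorm_dot in Hv.
  have Ex : x - v = 0.
    apply/eqP; case: (eqVneq (x - v) 0) => // nz.
    have := Lmin _ (latticeB xL (VL v vV)) nz.
    rewrite sqnormB; have := Vlt2 v vV; lra.
  by move/eqP: Ex; rewrite subr_eq0 => /eqP ->.
split.
  move=> x xL; split; first exact: conv_lat.
  by case=> [/conv_mem //|->]; exact: (conv0 v0V (Vsym _ v0V)).
move=> x; split; first exact: vertex_mem.
move=> xV; split; first exact: conv_mem.
move=> y z t Cy Cz /andP[t0 t1] Ex.
have x1 : 1 <= sqnorm x by apply: Lmin; [exact: VL|case: (Vlat x xV)].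
have H : forall i : 'I_(size V), V`_i != x -> dot V`_i x < dot x x.
  move=> i ni; have wV := mem_nth 0 (ltn_ord i).
  have nz : V`_i - x != 0 by rewrite subr_eq0.
  have := Lmin _ (latticeB (VL _ wV) (VL _ xV)) nz.
  rewrite sqnormB -!sqnorm_dot; have := Vlt2 _ wV; lra.
have [hy1 hy2] := conv_le H Cy; have [hz1 hz2] := conv_le H Cz.
have Edot : dot x x = t * dot y x + (1 - t) * dot z x.
  by rewrite {1}Ex dotDl !dotZl.
split; [apply: hy2|apply: hz2]; nra.
Qed.
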